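(* Let $p,q\ge0$, $n=p+q\ge1$. For every $M\in\mathcal{G}^{\mathbb{C}}_{p,q}$, $${\rm rank}(M)={\rm rank}(\widehat{M})={\rm rank}(\widetilde{M})={\rm rank}(\overline{M})={\rm rank}(M^\dagger)={\rm rank}(M^\dagger M)={\rm rank}(MM^\dagger).$$
   Context: Let $\mathcal{G}_{p,q}$ be the real Clifford algebra with identity $e$ and generators $e_1,\dots,e_n$ satisfying $e_ae_b+e_be_a=2\eta_{ab}e$, $\eta={\rm diag}(1,\dots,1,-1,\dots,-1)$ ($p$ ones, $q$ minus ones), basis elements $e_A=e_{a_1}\cdots e_{a_k}$ for $a_1<\dots<a_k$ (grade $k$), and $\mathcal{G}^{\mathbb{C}}_{p,q}=\mathbb{C}\otimes\mathcal{G}_{p,q}$ with elements $M=\sum_A m_Ae_A$, $m_A\in\mathbb{C}$. Let $\langle M\rangle_k$ be the projection onto the span of the grade-$k$ basis elements. Define the grade involution $\widehat{M}=\sum_k(-1)^k\langle M\rangle_k$, the reversion $\widetilde{M}=\sum_k(-1)^{k(k-1)/2}\langle M\rangle_k$, complex conjugation $\overline{M}=\sum_A\overline{m_A}e_A$, and Hermitian conjugation $M^\dagger=\sum_A\overline{m_A}(e_A)^{-1}$. Let $N=2^{\lfloor (n+1)/2\rfloor}$ and let $\beta$ be an algebra isomorphism from $\mathcal{G}^{\mathbb{C}}_{p,q}$ onto ${\rm Mat}(N,\mathbb{C})$ if $n$ is even, and onto the algebra of block-diagonal matrices ${\rm diag}(X,Y)$, $X,Y\in{\rm Mat}(N/2,\mathbb{C})$,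 if $n$ is odd. The rank is ${\rm rank}(M):={\rm rank}(\beta(M))$, independent of the choice of $\beta$. *)

(* Defs.v *)
From HB Require Import structures.
From mathcomp Require Import all_boot all_order all_algebra.
From Stdlib Require Import ClassicalEpsilon.
Set Implicit Arguments. Unset Strict Implicit. Unset Printing Implicit Defensive.
Import Order.TTheory GRing.Theory Num.Theory.
Local Open Scope ring_scope.

(* The complexified Clifford algebra G^C_{p,q}, n = p + q, over a numeric
   algebraically closed field C with conjugation z^* (e.g. C = complex numbers).
   An element M = \sum_A m_A e_A is represented by its coefficient function
   A |-> m_A, where A ranges over subsets of {0,..,n-1}; the subset
   A = {a_1 < ... < a_k} stands for the basis element e_A = e_{a_1}...e_{a_k}. *)

Section Clifford.
Variable C : numClosedFieldType.
Variables p q : nat.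
Local Notation n := (p + q)%N.

Definition cl := {ffun {set 'I_n} -> C}.

Definition eta (a : 'I_n) : C := if (a < p)%N then 1 else -1.

Definition cbasis (A : {set 'I_n}) : cl := [ffun B => (B == A)%:R].
Definition cone : cl := cbasis set0.

Definition cadd (M N : cl) : cl := [ffun A : {set 'I_n} => M A + N A].
Definition cscale (c : C) (M : cl) : cl := [ffun A : {set 'I_n} => c * M A].

(* product of basis blades, from e_a e_b + e_b e_a = 2 eta_ab e:
   e_A e_B = (-1)^{#{(a,b) : a in A, b in B, b < a}} (prod_{a in A cap B} eta_aa) e_{A Delta B} *)
Definition blade_sign (A B : {set 'I_n}) : C :=
  (-1) ^+ #|[set ab : 'I_n * 'I_n | (ab.1 \in A) && (ab.2 \in B) && (ab.2 < ab.1)%N]|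
  * \prod_(a in A :&: B) eta a.

Definition symdiff (A B : {set 'I_n}) : {set 'I_n} := (A :\: B) :|: (B :\: A).

Definition cmul (M N : cl) : cl :=
  [ffun D => \sum_(A : {set 'I_n}) \sum_(B : {set 'I_n})
     (if symdiff A B == D then M A * N B * blade_sign A B else 0)].

Definition grade (k : nat) (M : cl) : cl := [ffun A : {set 'I_n} => if #|A| == k then M A else 0].

Definition ginv (M : cl) : cl := [ffun A : {set 'I_n} => (-1) ^+ #|A| * M A].
(* reversion  \tilde M = sum_k (-1)^{k(k-1)/2} <M>_k ; note k(k-1)/2 = 'C(k,2) *)
Definition crev (M : cl) : cl := [ffun A : {set 'I_n} => (-1) ^+ 'C(#|A|, 2) * M A].
Definition cconj (M : cl) : cl := [ffun A : {set 'I_n} => (M A)^*].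

Definition binv (A : {set 'I_n}) : cl :=
  epsilon (inhabits cone)
    (fun X : cl => cmul (cbasis A) X = cone /\ cmul X (cbasis A) = cone).

Definition cherm (M : cl) : cl :=
  \big[cadd/[ffun=> 0]]_(A : {set 'I_n}) cscale ((M A)^*) (binv A).

Definition Ndim : nat := 2 ^ (n.+1)./2.

Definition is_blockdiag (X : 'M[C]_Ndim) : Prop :=
  forall i j : 'I_Ndim, ((i < Ndim %/ 2)%N != (j < Ndim %/ 2)%N) -> X i j = 0.

Definition clifford_iso (beta : cl -> 'M[C]_Ndim) : Prop :=
  (forall M N, beta (cadd M N) = beta M + beta N) /\
  (forall c M, beta (cscale c M) = c *: beta M) /\
  (forall M N, beta (cmul M N) = beta M *m beta N) /\
  beta cone = 1%:M /\
  injective beta /\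
  (forall X : 'M[C]_Ndim, (exists M, beta M = X) <-> (if odd n then is_blockdiag X else True)).

End Clifford.

(* Main.v *)
Require Import Defs.
From HB Require Import structures.
From mathcomp Require Import all_boot all_order all_algebra ring zify.
From Stdlib Require Import ClassicalEpsilon.
Set Implicit Arguments. Unset Strict Implicit. Unset Printing Implicit Defensive.
Import Order.TTheory GRing.Theory Num.Theory.
Local Open Scope ring_scope.

Lemma mx_ext_rV (F : fieldType) m n (P Q : 'M[F]_(m, n)) :
  (forall u : 'rV_m, u *m P = u *m Q) -> P = Q.
Proof. by move=> H; apply/row_matrixP => i; rewrite !rowE H. Qed.

Lemma lin_mulmxrM (F : fieldType) a b c d (X : 'M[F]_(b, c)) (Z : 'M[F]_(c, d)) :
  lin_mx (@mulmxr F a b d (X *m Z)) =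
  lin_mx (@mulmxr F a b c X) *m lin_mx (@mulmxr F a c d Z).
Proof.
apply: mx_ext_rV => u; rewrite mulmxA !mul_rV_lin /= mxvecK mulmxA //.
Qed.

Lemma lin_mulmxr1 (F : fieldType) a b :
  lin_mx (@mulmxr F a b b 1%:M) = 1%:M.
Proof. by apply: mx_ext_rV => u; rewrite mul_rV_lin /= mulmx1 vec_mxK mulmx1. Qed.

Lemma rank_lin_mulmxr (F : fieldType) a b c (A : 'M[F]_(b, c)) :
  \rank (lin_mx (@mulmxr F a b c A)) = (a * \rank A)%N.
Proof.
rewrite -{1}(mulmx_base A) lin_mulmxrM.
have /row_freeP [Z' HZ] := row_base_free A.
have /row_fullP [X' HX] := col_base_full A.
have Zfree : row_free (lin_mx (@mulmxr F a _ _ (row_base A))).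
  apply/row_freeP; exists (lin_mx (@mulmxr F a _ _ Z')).
  by rewrite -lin_mulmxrM HZ lin_mulmxr1.
rewrite mxrankMfree //.
have Xfull : row_full (lin_mx (@mulmxr F a _ _ (col_base A))).
  apply/row_fullP; exists (lin_mx (@mulmxr F a _ _ X')).
  by rewrite -lin_mulmxrM HX lin_mulmxr1.
by move/eqP: Xfull.
Qed.

Lemma in_symdiff p q (A B : {set 'I_(p + q)}) x :
  (x \in symdiff A B) = (x \in A) (+) (x \in B).
Proof. by rewrite /symdiff !inE; case: (x \in A); case: (x \in B). Qed.

Lemma symdiffK p q (A B : {set 'I_(p + q)}) : symdiff A (symdiff A B) = B.
Proof. by apply/setP => x; rewrite !in_symdiff; case: (x \in A); case: (x \in B). Qed.
Lemma symdiffC p q (A B : {set 'I_(p + q)}) : symdiff A B = symdiff B A.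
Proof. by apply/setP => x; rewrite !in_symdiff; case: (x \in A); case: (x \in B). Qed.
Lemma symdiffA p q (A B D : {set 'I_(p + q)}) :
  symdiff A (symdiff B D) = symdiff (symdiff A B) D.
Proof. by apply/setP => x; rewrite !in_symdiff; case: (x \in A); case: (x \in B); case: (x \in D). Qed.
Lemma symdiff0 p q (A : {set 'I_(p + q)}) : symdiff A set0 = A.
Proof. by apply/setP => x; rewrite !in_symdiff inE; case: (x \in A). Qed.
Lemma symdiffvv p q (A : {set 'I_(p + q)}) : symdiff A A = set0.
Proof. by apply/setP => x; rewrite !in_symdiff inE; case: (x \in A). Qed.
Lemma symdiff_eq p q (A B D : {set 'I_(p + q)}) :
  (symdiff A B == D) = (B == symdiff A D).
Proof.
apply/eqP/eqP => [<-|->]; by rewrite symdiffK.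
Qed.

Local Notation ff C p q := {ffun {set 'I_(p + q)} -> C}.
Lemma caddE (C : numClosedFieldType) p q (M N : ff C p q) : cadd M N = M + N.
Proof. by apply/ffunP => A; rewrite !ffunE. Qed.

Lemma cmulE (C : numClosedFieldType) p q (X M : cl C p q) D :
  cmul X M D = \sum_A X A * M (symdiff A D) * blade_sign C A (symdiff A D).
Proof.
rewrite ffunE; apply: eq_bigr => A _.
rewrite (eq_bigr (fun B => if B == symdiff A D then X A * M B * blade_sign C A B else 0)).
  by rewrite -big_mkcond big_pred1_eq.
by move=> B _; rewrite symdiff_eq.
Qed.

Lemma cbasisE (C : numClosedFieldType) p q (A B : {set 'I_(p + q)}) :
  cbasis C A B = (B == A)%:R.
Proof. by rewrite ffunE. Qed.

Lemma cmul_bas (C : numClosedFieldType) p q (A B : {set 'I_(p + q)}) :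
  cmul (cbasis C A) (cbasis C B) = cscale (blade_sign C A B) (cbasis C (symdiff A B)).
Proof.
apply/ffunP => D; rewrite cmulE ffunE cbasisE.
rewrite (bigD1 A) //= big1 => [|A' nA]; last by rewrite cbasisE (negbTE nA) !mul0r.
rewrite addr0 cbasisE eqxx mul1r cbasisE.
have -> : (symdiff A D == B) = (D == symdiff A B).
  by apply/eqP/eqP => [<-|->]; rewrite symdiffK.
by case: eqP => [->|_]; rewrite ?symdiffK ?mulr1 ?mul1r ?mul0r ?mulr0.
Qed.

Lemma sign_sq (C : numClosedFieldType) p q (A B : {set 'I_(p + q)}) :
  blade_sign C A B * blade_sign C A B = 1.
Proof.
rewrite /blade_sign mulrACA -exprD addnn -mul2n exprM sqrrN expr1n expr1n mul1r.
rewrite -big_split /=; apply: big1 => a _; rewrite /Defs.eta.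
by case: ifP => _; rewrite ?mulr1 ?mulrNN ?mulr1.
Qed.

Lemma sign_conj (C : numClosedFieldType) p q (A B : {set 'I_(p + q)}) :
  (blade_sign C A B)^* = blade_sign C A B.
Proof.
rewrite /blade_sign rmorphM rmorphXn rmorphN1 rmorph_prod; congr (_ * _).
apply: eq_bigr => a _; rewrite /Defs.eta; case: ifP => _; by rewrite ?rmorph1 ?rmorphN1.
Qed.

Lemma sign0l (C : numClosedFieldType) p q (B : {set 'I_(p + q)}) :
  blade_sign C set0 B = 1.
Proof.
rewrite /blade_sign set0I big_set0 mulr1.
rewrite (_ : [set _ | _] = set0) ?cards0 ?expr0 //.
by apply/setP => ab; rewrite !inE.
Qed.

Lemma sign0r (C : numClosedFieldType) p q (A : {set 'I_(p + q)}) :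
  blade_sign C A set0 = 1.
Proof.
rewrite /blade_sign setI0 big_set0 mulr1.
rewrite (_ : [set _ | _] = set0) ?cards0 ?expr0 //.
by apply/setP => ab; rewrite !inE andbF.
Qed.

Lemma cmulA (C : numClosedFieldType) p q (beta : cl C p q -> 'M[C]_(Ndim p q))
  (Hbeta : clifford_iso beta) (X Y Z : cl C p q) :
  cmul (cmul X Y) Z = cmul X (cmul Y Z).
Proof.
case: Hbeta => _ [_ [Hmul [_ [Hinj _]]]]; apply: Hinj.
by rewrite !Hmul mulmxA.
Qed.

Lemma cmul1r (C : numClosedFieldType) p q (beta : cl C p q -> 'M[C]_(Ndim p q))
  (Hbeta : clifford_iso beta) (X : cl C p q) : cmul X (cone C p q) = X.
Proof.
case: Hbeta => _ [_ [Hmul [Hone [Hinj _]]]]; apply: Hinj.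
by rewrite !Hmul Hone mulmx1.
Qed.

Lemma cmul1l (C : numClosedFieldType) p q (beta : cl C p q -> 'M[C]_(Ndim p q))
  (Hbeta : clifford_iso beta) (X : cl C p q) : cmul (cone C p q) X = X.
Proof.
case: Hbeta => _ [_ [Hmul [Hone [Hinj _]]]]; apply: Hinj.
by rewrite !Hmul Hone mul1mx.
Qed.

Lemma cmulZl (C : numClosedFieldType) p q (beta : cl C p q -> 'M[C]_(Ndim p q))
  (Hbeta : clifford_iso beta) c (X Y : cl C p q) :
  cmul (cscale c X) Y = cscale c (cmul X Y).
Proof.
case: Hbeta => _ [Hsc [Hmul [_ [Hinj _]]]]; apply: Hinj.
by rewrite Hsc !Hmul Hsc scalemxAl.
Qed.

Lemma cmulZr (C : numClosedFieldType) p q (beta : cl C p q -> 'M[C]_(Ndim p q))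
  (Hbeta : clifford_iso beta) c (X Y : cl C p q) :
  cmul X (cscale c Y) = cscale c (cmul X Y).
Proof.
case: Hbeta => _ [Hsc [Hmul [_ [Hinj _]]]]; apply: Hinj.
by rewrite Hsc !Hmul Hsc scalemxAr.
Qed.

Lemma cscaleA (C : numClosedFieldType) p q c d (X : cl C p q) :
  cscale c (cscale d X) = cscale (c * d) X.
Proof. by apply/ffunP => A; rewrite !ffunE mulrA. Qed.

Lemma sign_assoc (C : numClosedFieldType) p q (beta : cl C p q -> 'M[C]_(Ndim p q))
  (Hbeta : clifford_iso beta) (A B D : {set 'I_(p + q)}) :
  blade_sign C A B * blade_sign C (symdiff A B) D =
  blade_sign C B D * blade_sign C A (symdiff B D).
Proof.
have := cmulA Hbeta (cbasis C A) (cbasis C B) (cbasis C D).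
rewrite !cmul_bas (cmulZl Hbeta) (cmulZr Hbeta) !cmul_bas !cscaleA symdiffA.
move/ffunP => /(_ (symdiff (symdiff A B) D)).
by rewrite !ffunE eqxx !mulr1.
Qed.

Lemma sign_herm (C : numClosedFieldType) p q (beta : cl C p q -> 'M[C]_(Ndim p q))
  (Hbeta : clifford_iso beta) (A B : {set 'I_(p + q)}) :
  blade_sign C (symdiff A B) B = blade_sign C A B * blade_sign C B B.
Proof.
have := sign_assoc Hbeta A B B; rewrite symdiffvv sign0r mulr1 => <-.
by rewrite mulrA sign_sq mul1r.
Qed.

Lemma binvE (C : numClosedFieldType) p q (beta : cl C p q -> 'M[C]_(Ndim p q))
  (Hbeta : clifford_iso beta) (A : {set 'I_(p + q)}) :
  binv C A = cscale (blade_sign C A A) (cbasis C A).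
Proof.
set X0 := cscale _ _.
have H0 : cmul (cbasis C A) X0 = cone C p q /\ cmul X0 (cbasis C A) = cone C p q.
  rewrite /X0 (cmulZl Hbeta) (cmulZr Hbeta) cmul_bas cscaleA sign_sq symdiffvv.
  by split; apply/ffunP => D; rewrite !ffunE mul1r.
have := epsilon_spec (inhabits (cone C p q))
  (fun X : cl C p q => cmul (cbasis C A) X = cone C p q /\ cmul X (cbasis C A) = cone C p q)
  (ex_intro _ X0 H0).
rewrite -/(binv C A) => -[_ H2].
rewrite -(cmul1r Hbeta (binv C A)) -H0.1 -(cmulA Hbeta) H2.
by rewrite (cmul1l Hbeta).
Qed.

Lemma chermE (C : numClosedFieldType) p q (beta : cl C p q -> 'M[C]_(Ndim p q))
  (Hbeta : clifford_iso beta) (M : cl C p q) D :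
  cherm M D = (M D)^* * blade_sign C D D.
Proof.
rewrite /cherm (big_morph (fun X : cl C p q => X D) (id1 := 0) (op1 := +%R)); first last.
- by rewrite ffunE.
- by move=> X Y; rewrite ffunE.
rewrite (bigD1 D) //= big1 => [|A nA]; last first.
  by rewrite (binvE Hbeta) !ffunE eq_sym (negbTE nA) !mulr0.
by rewrite addr0 (binvE Hbeta) !ffunE eqxx mulr1.
Qed.

Definition ev p q (i : 'I_#|{set 'I_(p + q)}|) : {set 'I_(p + q)} := enum_val i.

Definition Rm (C : numClosedFieldType) p q (M : cl C p q) : 'M[C]_#|{set 'I_(p + q)}| :=
  \matrix_(i, j) (M (symdiff (ev i) (ev j)) * blade_sign C (ev i) (symdiff (ev i) (ev j))).

Definition coords (C : numClosedFieldType) p q (X : cl C p q) : 'rV[C]_#|{set 'I_(p + q)}| :=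
  \row_i X (ev i).

Lemma sum_ev (C : numClosedFieldType) p q (F : {set 'I_(p + q)} -> C) :
  \sum_A F A = \sum_i F (ev i).
Proof. by rewrite (big_enum_val F). Qed.

Lemma coords_mul (C : numClosedFieldType) p q (X M : cl C p q) :
  coords (cmul X M) = coords X *m Rm M.
Proof.
apply/rowP => j; rewrite !mxE cmulE sum_ev; apply: eq_bigr => i _.
by rewrite !mxE mulrA.
Qed.

Lemma coords_bas (C : numClosedFieldType) p q i :
  coords (cbasis C (ev i)) = delta_mx 0 i :> 'rV[C]_#|{set 'I_(p + q)}|.
Proof.
apply/rowP => j; rewrite !mxE cbasisE /= /ev.
by rewrite (inj_eq enum_val_inj).
Qed.

Lemma Rm_row (C : numClosedFieldType) p q (M : cl C p q) i :
  row i (Rm M) = coords (cmul (cbasis C (ev i)) M).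
Proof. by rewrite coords_mul coords_bas rowE. Qed.

Lemma Rm_mul (C : numClosedFieldType) p q (beta : cl C p q -> 'M[C]_(Ndim p q))
  (Hbeta : clifford_iso beta) (M1 M2 : cl C p q) :
  Rm (cmul M1 M2) = Rm M1 *m Rm M2.
Proof.
apply/row_matrixP => i; rewrite row_mul !Rm_row -(cmulA Hbeta).
by rewrite coords_mul.
Qed.

Definition phi (C : numClosedFieldType) p q (f : 'I_(p + q) -> C) (A : {set 'I_(p + q)}) : C :=
  \prod_(a in A) f a.

Lemma phi_symdiff (C : numClosedFieldType) p q (f : 'I_(p + q) -> C)
  (Hf : forall a, f a * f a = 1) (A B : {set 'I_(p + q)}) :
  phi f (symdiff A B) = phi f A * phi f B.
Proof.
rewrite /phi [in RHS]big_mkcond [X in _ * X]big_mkcond -big_split big_mkcond /=.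
apply: eq_bigr => a _; rewrite in_symdiff.
by case: (a \in A); case: (a \in B); rewrite /= ?mulr1 ?mul1r ?Hf.
Qed.

Definition flip (C : numClosedFieldType) p q (f : 'I_(p + q) -> C) (M : cl C p q) : cl C p q :=
  [ffun A => phi f A * M A].

Lemma rank_sandwich (F : fieldType) m (D X : 'M[F]_m) :
  D *m D = 1%:M -> \rank (D *m X *m D) = \rank X.
Proof.
move=> HD; apply/eqP; rewrite eqn_leq; apply/andP; split.
  by apply: (leq_trans (mxrankM_maxl (D *m X) D)); exact: mxrankM_maxr.
have E : D *m (D *m X *m D) *m D = X by rewrite !mulmxA HD mul1mx -mulmxA HD mulmx1.
rewrite -{1}E.
by apply: (leq_trans (mxrankM_maxl (D *m _) D)); exact: mxrankM_maxr.
Qed.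

Lemma rank_flip (C : numClosedFieldType) p q (f : 'I_(p + q) -> C)
  (Hf : forall a, f a * f a = 1) (M : cl C p q) :
  \rank (Rm (flip f M)) = \rank (Rm M).
Proof.
set d : 'rV[C]_#|{set 'I_(p + q)}| := \row_i phi f (ev i).
have HD : diag_mx d *m diag_mx d = 1%:M.
  apply/matrixP => i j; rewrite mul_diag_mx !mxE.
  case: eqP => [->|_]; rewrite ?mulr0 ?mulr1n //.
  rewrite /phi -big_split /=; by rewrite big1 // => a _; rewrite Hf.
rewrite -(rank_sandwich (Rm M) HD); congr (\rank _).
apply/matrixP => i j; rewrite mul_mx_diag mul_diag_mx !mxE ffunE.
rewrite phi_symdiff //; ring.
Qed.

Lemma conjCM' (C : numClosedFieldType) (x y : C) : (x * y)^* = x^* * y^*.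
Proof. exact: rmorphM. Qed.

Lemma rank_conjmx (C : numClosedFieldType) m n (A : 'M[C]_(m, n)) :
  \rank (map_mx (fun x => x^*) A) = \rank A.
Proof. exact: (mxrank_map (Num.conj_op : {rmorphism C -> C})). Qed.

Lemma rank_conj (C : numClosedFieldType) p q (M : cl C p q) :
  \rank (Rm (cconj M)) = \rank (Rm M).
Proof.
rewrite -(rank_conjmx (Rm M)); congr (\rank _).
by apply/matrixP => i j; rewrite !mxE ffunE conjCM' sign_conj.
Qed.

Lemma Rm_herm (C : numClosedFieldType) p q (beta : cl C p q -> 'M[C]_(Ndim p q))
  (Hbeta : clifford_iso beta) (M : cl C p q) :
  Rm (cherm M) = (map_mx (fun x => x^*) (Rm M))^T.
Proof.
apply/matrixP => i j; rewrite !mxE (chermE Hbeta) conjCM' sign_conj.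
rewrite [symdiff (ev j) (ev i)]symdiffC.
set B := symdiff (ev i) (ev j).
have -> : ev j = symdiff (ev i) B by rewrite /B symdiffK.
rewrite (sign_herm Hbeta); ring.
Qed.

Lemma adj_row_eq0 (C : numClosedFieldType) n (u : 'rV[C]_n) :
  u *m (map_mx (fun x => x^*) u)^T = 0 -> u = 0.
Proof.
move/matrixP => /(_ 0 0); rewrite !mxE => H.
have H2 : \sum_k `|u 0 k| ^+ 2 = 0.
  rewrite (eq_bigr (fun k => u 0 k * (u 0 k)^*)) => [|k _]; last by rewrite normCK.
  by rewrite -[RHS]H; apply: eq_bigr => k _; rewrite !mxE.
apply/rowP => k; rewrite mxE.
have Hall := psumr_eq0P (fun i _ => exprn_ge0 2 (normr_ge0 (u 0 i))) H2.
have := Hall k isT.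
by move/eqP; rewrite expf_eq0 /= normr_eq0 => /eqP.
Qed.

Lemma rank_mul_adj (C : numClosedFieldType) m n (B : 'M[C]_(m, n)) :
  \rank (B *m (map_mx (fun x => x^*) B)^T) = \rank B.
Proof.
set BH := (map_mx _ B)^T.
have := mxrank_mul_ker B BH.
suff -> : (B :&: kermx BH)%MS = 0 by rewrite mxrank0 addn0.
apply/row_matrixP => i; rewrite row0.
set X := (B :&: kermx BH)%MS.
have uB : (row i X <= B)%MS := submx_trans (row_sub i X) (capmxSl _ _).
have /sub_kermxP uK : (row i X <= kermx BH)%MS := submx_trans (row_sub i X) (capmxSr _ _).
apply: adj_row_eq0.
move/submxP: uB => [w Ew].
rewrite {2}Ew map_mxM trmx_mul mulmxA.
by rewrite uK mul0mx.
Qed.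

Lemma beta_coords (C : numClosedFieldType) p q (beta : cl C p q -> 'M[C]_(Ndim p q))
  (Hbeta : clifford_iso beta) (X : cl C p q) :
  beta X = \sum_i X (ev i) *: beta (cbasis C (ev i)).
Proof.
case: Hbeta => Hadd [Hsc _].
set Z : cl C p q := [ffun => 0].
have HZ : beta Z = 0.
  have : beta (cadd Z Z) = beta Z + beta Z by rewrite Hadd.
  rewrite (_ : cadd Z Z = Z); last by apply/ffunP => A; rewrite !ffunE addr0.
  by move/esym/eqP; rewrite -subr_eq0 addrK => /eqP.
have EX : X = \big[@cadd C p q/Z]_i cscale (X (ev i)) (cbasis C (ev i)).
  apply/ffunP => D.
  rewrite (big_morph (fun Y : cl C p q => Y D) (id1 := 0) (op1 := +%R)); first last.
  - by rewrite ffunE.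
  - by move=> Y1 Y2; rewrite ffunE.
  rewrite -(sum_ev (fun A => cscale (X A) (cbasis C A) D)).
  rewrite (bigD1 D) //= big1 => [|A nA]; last by rewrite !ffunE eq_sym (negbTE nA) mulr0.
  by rewrite !ffunE eqxx mulr1 addr0.
rewrite {1}EX (big_morph beta (id2 := Z) (op2 := @cadd C p q) (op1 := +%R) Hadd HZ).
by apply: eq_bigr => i _; rewrite Hsc.
Qed.

Lemma rank_transfer (C : numClosedFieldType) p q (beta : cl C p q -> 'M[C]_(Ndim p q))
  (Hbeta : clifford_iso beta) k c (enc : 'M[C]_(Ndim p q) -> 'rV[C]_k)
  (K : 'M[C]_(Ndim p q) -> 'M[C]_k) :
  (forall a Y Z, enc (a *: Y + Z) = a *: enc Y + enc Z) ->
  (forall X Y, enc (beta X *m beta Y) = enc (beta X) *m K (beta Y)) ->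
  (forall X, enc (beta X) = 0 -> beta X = 0) ->
  (forall v, exists X, enc (beta X) = v) ->
  (forall X, \rank (K (beta X)) = (c * \rank (beta X))%N) ->
  forall M, \rank (Rm M) = (c * \rank (beta M))%N.
Proof.
move=> Hlin Hmul H3 H4 H5 M.
have enc0 : enc 0 = 0.
  by have := Hlin (-1) 0 0; rewrite !scaleN1r oppr0 addr0 addNr.
have encD : forall Y Z, enc (Y + Z) = enc Y + enc Z.
  by move=> Y Z; have := Hlin 1 Y Z; rewrite !scale1r.
have encZ : forall a Y, enc (a *: Y) = a *: enc Y.
  by move=> a Y; have := Hlin a Y 0; rewrite !addr0 enc0 addr0.
set T : 'M[C]_(#|{set 'I_(p + q)}|, k) := \matrix_(i, j) enc (beta (cbasis C (ev i))) 0 j.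
have rowT : forall i, row i T = enc (beta (cbasis C (ev i))).
  by move=> i; apply/rowP => j; rewrite !mxE.
have encT : forall X, enc (beta X) = coords X *m T.
  move=> X; rewrite (beta_coords Hbeta X) mulmx_sum_row.
  rewrite (big_morph enc encD enc0); apply: eq_bigr => i _.
  by rewrite encZ rowT mxE.
case: (Hbeta) => Hadd [_ [Hm [_ [Hinj _]]]].
have RT : Rm M *m T = T *m K (beta M).
  apply/row_matrixP => i; rewrite !row_mul Rm_row -encT Hm rowT.
  by rewrite Hmul.
have Tfree : row_free T.
  rewrite -kermx_eq0; apply/eqP/row_matrixP => i; rewrite row0.
  set r := row i (kermx T).
  have rT : r *m T = 0 by rewrite /r -row_mul mulmx_ker row0.
  set X : cl C p q := [ffun A => r 0 (enum_rank A)].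
  have cX : coords X = r by apply/rowP => j; rewrite mxE ffunE /ev enum_valK.
  have bX : beta X = 0 by apply: H3; rewrite encT cX.
  set Z : cl C p q := [ffun => 0].
  have HZ : beta Z = 0.
    have : beta (cadd Z Z) = beta Z + beta Z by rewrite Hadd.
    rewrite (_ : cadd Z Z = Z); last by apply/ffunP => A; rewrite !ffunE addr0.
    by move/esym/eqP; rewrite -subr_eq0 addrK => /eqP.
  have XZ : X = Z by apply: Hinj; rewrite bX HZ.
  by rewrite -cX XZ; apply/rowP => j; rewrite !mxE ffunE.
have Tfull : row_full T.
  rewrite -sub1mx; apply/row_subP => i.
  have [X EX] := H4 (row i 1%:M).
  by rewrite -EX encT submxMl.
rewrite -(mxrankMfree _ Tfree) RT (eqmxMfull _ Tfull).
exact: H5.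
Qed.

Lemma castmx_mul (R : pzRingType) k l (e : k = l) (A B : 'M[R]_k) :
  castmx (e, e) (A *m B) = castmx (e, e) A *m castmx (e, e) B.
Proof. by case: l / e; rewrite !castmx_id. Qed.

Lemma castmx_rank (F : fieldType) k l (e : k = l) (A : 'M[F]_k) :
  \rank (castmx (e, e) A) = \rank A.
Proof. by case: l / e; rewrite !castmx_id. Qed.

Lemma castmx_lin (R : pzRingType) k l (e : k = l) a (A B : 'M[R]_k) :
  castmx (e, e) (a *: A + B) = a *: castmx (e, e) A + castmx (e, e) B.
Proof. by case: l / e; rewrite !castmx_id. Qed.

Lemma castmx_0 (R : pzRingType) k l (e : k = l) :
  castmx (e, e) (0 : 'M[R]_k) = 0.
Proof. by case: l / e; rewrite !castmx_id. Qed.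

Lemma Ndim_odd p q : odd (p + q) -> Ndim p q = (Ndim p q %/ 2 + Ndim p q %/ 2)%N.
Proof.
rewrite /Ndim; move: (p + q)%N => n; case: n => [|n] //= _.
by rewrite expnS mulKn // addnn -mul2n.
Qed.

Lemma rank_Rm_beta (C : numClosedFieldType) p q (beta : cl C p q -> 'M[C]_(Ndim p q))
  (Hbeta : clifford_iso beta) :
  exists c, (0 < c)%N /\ forall M, \rank (Rm M) = (c * \rank (beta M))%N.
Proof.
have Hs := Hbeta.2.2.2.2.2.
case Ho: (odd (p + q)) Hs => Hs; last first.
  exists (Ndim p q); split; first by rewrite /Ndim expn_gt0.
  apply: (rank_transfer Hbeta (enc := mxvec) (K := fun A => lin_mx (mulmxr A))).
  - by move=> a Y Z; rewrite linearP.
  - by move=> X Y; rewrite mul_vec_lin.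
  - by move=> X /eqP; rewrite mxvec_eq0 => /eqP.
  - move=> v; have [X EX] := (Hs (vec_mx v)).2 I.
    by exists X; rewrite EX vec_mxK.
  - by move=> X; rewrite rank_lin_mulmxr.
set h := (Ndim p q %/ 2)%N.
have eN : Ndim p q = (h + h)%N by exact: Ndim_odd.
exists h; split.
  have N0 : (0 < Ndim p q)%N by rewrite /Ndim expn_gt0.
  by move: N0; rewrite eN addn_gt0 orbb.
have bd : forall Y : 'M[C]_(Ndim p q), is_blockdiag Y ->
    castmx (eN, eN) Y = block_mx (ulsubmx (castmx (eN, eN) Y)) 0 0 (drsubmx (castmx (eN, eN) Y)).
  move=> Y HY; rewrite -{1}(submxK (castmx (eN, eN) Y)); congr block_mx.
  - apply/matrixP => i j; rewrite !mxE castmxE; apply: HY => /=.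
    by rewrite ltn_ord /= ltnNge leq_addr.
  - apply/matrixP => i j; rewrite !mxE castmxE; apply: HY => /=.
    by rewrite ltn_ord /= ltnNge leq_addr.
pose enc (Y : 'M[C]_(Ndim p q)) : 'rV[C]_(h * h + h * h) :=
  row_mx (mxvec (ulsubmx (castmx (eN, eN) Y))) (mxvec (drsubmx (castmx (eN, eN) Y))).
pose K (A : 'M[C]_(Ndim p q)) : 'M[C]_(h * h + h * h) :=
  block_mx (lin_mx (@mulmxr C h h h (ulsubmx (castmx (eN, eN) A)))) 0 0
           (lin_mx (@mulmxr C h h h (drsubmx (castmx (eN, eN) A)))).
have inS : forall X, is_blockdiag (beta X) by move=> X; apply: (Hs (beta X)).1; exists X.
apply: (rank_transfer Hbeta (enc := enc) (K := K)).
- move=> a Y Z; rewrite /enc castmx_lin /ulsubmx /drsubmx !linearP /=.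
  by rewrite scale_row_mx add_row_mx.
- move=> X Y; rewrite /enc /K castmx_mul (bd _ (inS X)) (bd _ (inS Y)).
  rewrite mulmx_block !mulmx0 !mul0mx !addr0 !add0r !block_mxKul !block_mxKdr.
  rewrite mul_row_block !mulmx0 addr0 add0r !mul_vec_lin.
  done.
- move=> X /eqP; rewrite /enc row_mx_eq0 !mxvec_eq0 => /andP[/eqP H1 /eqP H2].
  apply: (can_inj (castmxK eN eN)); rewrite castmx_0 (bd _ (inS X)) H1 H2.
  by rewrite block_mx0.
- move=> v.
  set B := block_mx (vec_mx (lsubmx v)) 0 0 (vec_mx (rsubmx v)) : 'M[C]_(h + h).
  set Y := castmx (esym eN, esym eN) B.
  have HY : is_blockdiag Y.
    move=> i j; rewrite /Y castmxE !mxE.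
    have vi : val (cast_ord (esym (esym eN, esym eN).1) i) = val i by [].
    have vj : val (cast_ord (esym (esym eN, esym eN).2) j) = val j by [].
    move: vi vj; set i1 := cast_ord _ i; set j1 := cast_ord _ j => vi vj.
    rewrite -/h -vi -vj.
    case: (splitP i1) => i' Ei; rewrite ?mxE; case: (splitP j1) => j' Ej;
      rewrite ?mxE ?Ei ?Ej //.
  have [X EX] := (Hs Y).2 HY.
  exists X; rewrite EX /enc /Y castmxKV /B block_mxKul block_mxKdr !vec_mxK.
  by rewrite hsubmxK.
- move=> X; rewrite /K rank_diag_block_mx !rank_lin_mulmxr -mulnDr.
  by rewrite -rank_diag_block_mx -(bd _ (inS X)) castmx_rank.
Qed.

Lemma count_pairs n (A : {set 'I_n}) :
  #|[set ab : 'I_n * 'I_n | (ab.1 \in A) && (ab.2 \in A) && (ab.2 < ab.1)%N]| = 'C(#|A|, 2).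
Proof.
set P := [set ab : 'I_n * 'I_n | _].
set Q := [set ab : 'I_n * 'I_n | (ab.1 \in A) && (ab.2 \in A) && (ab.1 < ab.2)%N].
set Dg := [set ab : 'I_n * 'I_n | (ab.1 \in A) && (ab.2 \in A) && (nat_of_ord ab.1 == nat_of_ord ab.2)].
have sw_inj : injective (fun ab : 'I_n * 'I_n => (ab.2, ab.1)) by move=> [a b] [c d] [-> ->].
have EQ : Q = (fun ab : 'I_n * 'I_n => (ab.2, ab.1)) @: P.
  apply/setP => -[a b]; apply/idP/imsetP => [|[[c d]]].
    by rewrite !inE /= => /andP[/andP[Ha Hb] Hab]; exists (b, a); rewrite // !inE /= Ha Hb Hab.
  by rewrite !inE /= => /andP[/andP[Hc Hd] Hdc] [-> ->]; rewrite Hc Hd Hdc.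
have dg_inj : injective (fun a : 'I_n => (a, a)) by move=> a b [].
have ED : Dg = (fun a : 'I_n => (a, a)) @: A.
  apply/setP => -[a b]; apply/idP/imsetP => [|[c Hc [-> ->]]].
    by rewrite !inE /= => /andP[/andP[Ha Hb] /eqP /val_inj Hab]; exists a; rewrite // Hab.
  by rewrite !inE /= Hc eqxx.
have EX : setX A A = P :|: Q :|: Dg.
  apply/setP => -[a b]; rewrite !inE /=.
  by case: (a \in A); case: (b \in A) => //=; case: ltngtP.
have I1 : P :&: Q = set0.
  apply/setP => -[a b]; rewrite !inE /=.
  by case: (a \in A); case: (b \in A) => //=; case: ltngtP.
have I2 : (P :|: Q) :&: Dg = set0.
  apply/setP => -[a b]; rewrite !inE /=.
  by case: (a \in A); case: (b \in A) => //=; case: ltngtP.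
have := cardsX A A; rewrite EX cardsU I2 cards0 subn0 cardsU I1 cards0 subn0.
rewrite EQ ED !card_imset // bin2.
move: #|P| #|A| => x k Hk.
have -> : (k * k.-1 = x.*2)%N by case: k Hk => [|k] /= Hk; lia.
by rewrite doubleK.
Qed.

Lemma eta_sq (C : numClosedFieldType) p q (a : 'I_(p + q)) :
  Defs.eta C a * Defs.eta C a = 1.
Proof. by rewrite /Defs.eta; case: ifP; rewrite ?mulr1 ?mulrNN ?mulr1. Qed.

Lemma phi_sq (C : numClosedFieldType) p q (f : 'I_(p + q) -> C)
  (Hf : forall a, f a * f a = 1) (A : {set 'I_(p + q)}) : phi f A * phi f A = 1.
Proof. by rewrite /phi -big_split /= big1 // => a _; rewrite Hf. Qed.

Lemma sign_AA (C : numClosedFieldType) p q (A : {set 'I_(p + q)}) :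
  blade_sign C A A = (-1) ^+ 'C(#|A|, 2) * phi (@Defs.eta C p q) A.
Proof. by rewrite /blade_sign setIid count_pairs. Qed.

Lemma crevE (C : numClosedFieldType) p q (beta : cl C p q -> 'M[C]_(Ndim p q))
  (Hbeta : clifford_iso beta) (M : cl C p q) :
  crev M = cherm (cconj (flip (@Defs.eta C p q) M)).
Proof.
apply/ffunP => D; rewrite (chermE Hbeta) !ffunE conjCK sign_AA.
have := phi_sq (@eta_sq C p q) D; set x := phi _ D => Hx.
rewrite [RHS](_ : _ = x * x * ((-1) ^+ 'C(#|D|, 2) * M D)); last by ring.
by rewrite Hx mul1r.
Qed.

Lemma rank_herm (C : numClosedFieldType) p q (beta : cl C p q -> 'M[C]_(Ndim p q))
  (Hbeta : clifford_iso beta) (M : cl C p q) :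
  \rank (Rm (cherm M)) = \rank (Rm M).
Proof. by rewrite (Rm_herm Hbeta) mxrank_tr rank_conjmx. Qed.

Theorem theorem3 (C : numClosedFieldType) (p q : nat) (Hn : (0 < p + q)%N)
  (beta : cl C p q -> 'M[C]_(Ndim p q)) (Hbeta : clifford_iso beta)
  (M : cl C p q) :
  let r := fun X => \rank (beta X) in
  r M = r (ginv M) /\
  r M = r (crev M) /\
  r M = r (cconj M) /\
  r M = r (cherm M) /\
  r M = r (cmul (cherm M) M) /\
  r M = r (cmul M (cherm M)).
Proof.
move=> r.
have [c [c0 Hc]] := rank_Rm_beta Hbeta.
have key : forall X Y, \rank (Rm X) = \rank (Rm Y) -> r X = r Y.
  by move=> X Y; rewrite !Hc => /eqP; rewrite eqn_pmul2l // => /eqP.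
have Hm1 : forall a : 'I_(p + q), (-1 : C) * (-1) = 1 by move=> a; rewrite mulrNN mulr1.
split.
  apply: key; rewrite (_ : ginv M = flip (fun _ => -1) M) ?rank_flip //.
  by apply/ffunP => A; rewrite !ffunE /phi prodr_const.
split.
  apply: key; rewrite (crevE Hbeta) (rank_herm Hbeta) rank_conj rank_flip //.
  exact: eta_sq.
split; first by apply: key; rewrite rank_conj.
split; first by apply: key; rewrite (rank_herm Hbeta).
split.
  apply: key; rewrite (Rm_mul Hbeta) (Rm_herm Hbeta).
  rewrite -[RHS]mxrank_tr trmx_mul trmxK.
  have -> : map_mx (fun x => x^*) (Rm M) = (map_mx (fun x => x^*) (Rm M)^T)^T.
    by rewrite map_trmx trmxK.
  by rewrite rank_mul_adj mxrank_tr.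
apply: key; rewrite (Rm_mul Hbeta) (Rm_herm Hbeta).
by rewrite rank_mul_adj.
Qed.
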